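(* Assume the linear-model assumption and the irrepresentable condition from the context. Let $S\subseteq S^*$ be fixed, and let real numbers $(\tilde Z_i)_{i\in[d]\setminus S}$ and positive numbers $(\varepsilon_i)_{i\in[d]\setminus S}$ be given. Suppose there exists $\hat i\in[d]\setminus S$ such that (a) $\hat i\in\arg\max_{i\in[d]\setminus S}\{|\tilde Z_i|+\varepsilon_i\}$; (b) $|\tilde Z_i-Z_i^S|\le\varepsilon_i$ for all $i\in[d]\setminus S$; (c) $|\tilde Z_{\hat i}|>\frac{1+\mu_{S^*}}{1-\mu_{S^*}}\varepsilon_{\hat i}$. Then $|Z_{\hat i}^S|>\mu_{S^*}\max_{i\in S^*}|Z_i^S|$.
   Context: $(x,y)$ is a square-integrable random pair with $x\in\mathbb{R}^d$. Linear-model assumption: $\mathbb{E}[x]=0$, $y=\langle\beta^*,x\rangle+\epsilon$, $\mathbb{E}[\epsilon\mid x]=0$; $S^*=\mathrm{supp}(\beta^* )$, $s^*=|S^*|$. $\Sigma$ is the covariance of $x$, $\Sigma_F$ its principal submatrix on $F\subseteq[d]$, and $\mu_F=\max_{j\notin F}\|\Sigma_F^{-1}\mathrm{Cov}(x_F,x_j)\|_1$. Irrepresentable condition: for all $|F|=s^*$, $\Sigma_F$ is invertible and $0\le\mu_F<1$. $\mathcal{R}(\beta)=\mathbb{E}[(y-\langle x,\beta\rangle)^2]$, $\beta^S\in\arg\min_{\mathrm{supp}(\beta)\subseteq S}\mathcal{R}(\beta)$, and $Z_i^S=\mathbb{E}[x_i(y-\langle x,\beta^S\rangle)]$. *)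

(* Defs.v *)
From HB Require Import structures.
From mathcomp Require Import all_boot all_order all_algebra.
From mathcomp Require Import all_classical all_reals all_analysis.
Set Implicit Arguments. Unset Strict Implicit. Unset Printing Implicit Defensive.
Import Order.TTheory GRing.Theory Num.Theory.
Local Open Scope classical_set_scope.
Local Open Scope ring_scope.

Section defs.
Context {dT : measure_display} {T : measurableType dT} {R : realType}.
Variable P : probability T R.
Variable n : nat.

Definition inner (beta : 'I_n -> R) (x : 'I_n -> T -> R) : T -> R :=
  fun w => \sum_(i < n) beta i * x i w.

Definition supp (beta : 'I_n -> R) : {set 'I_n} := [set i | beta i != 0].

Definition Sigma (x : 'I_n -> T -> R) : 'M[R]_n :=
  \matrix_(i, j) fine (covariance P (x i) (x j)).

Definition SigmaF (x : 'I_n -> T -> R) (F : {set 'I_n}) : 'M[R]_#|F| :=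
  \matrix_(a, b) Sigma x (enum_val a) (enum_val b).

Definition covFj (x : 'I_n -> T -> R) (F : {set 'I_n}) (j : 'I_n) : 'cV[R]_#|F| :=
  \col_a Sigma x (enum_val a) j.

Definition norm1 m (v : 'cV[R]_m) : R := \sum_(a < m) `|v a 0|.

(* mu_F = max_{j notin F} || Sigma_F^{-1} Cov(x_F, x_j) ||_1  (0 if no such j) *)
Definition muF (x : 'I_n -> T -> R) (F : {set 'I_n}) : R :=
  \big[Num.max/0]_(j | j \notin F) norm1 (invmx (SigmaF x F) *m covFj x F j).

Definition irrepresentable (x : 'I_n -> T -> R) (s : nat) : Prop :=
  forall F : {set 'I_n}, #|F| = s ->
    SigmaF x F \in unitmx /\ 0 <= muF x F /\ muF x F < 1.

Definition sigma_of (x : 'I_n -> T -> R) : set (set T) :=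
  <<s [set A | exists i B, measurable B /\ A = x i @^-1` B] >>.

(* E[e | x] = 0 (a.s.), i.e. E[e 1_A] = 0 for every A in sigma(x) *)
Definition cond_exp_zero (e : T -> R) (x : 'I_n -> T -> R) : Prop :=
  forall A, sigma_of x A -> ('E_P[e \* \1_A] = 0)%E.

Definition risk (x : 'I_n -> T -> R) (y : T -> R) (beta : 'I_n -> R) : \bar R :=
  'E_P[fun w => (y w - inner beta x w) ^+ 2].

Definition is_betaS (x : 'I_n -> T -> R) (y : T -> R) (S : {set 'I_n})
    (beta : 'I_n -> R) : Prop :=
  supp beta \subset S /\
  forall b, supp b \subset S -> (risk x y beta <= risk x y b)%E.

Definition Zres (x : 'I_n -> T -> R) (y : T -> R) (beta : 'I_n -> R) (i : 'I_n) : R :=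
  fine 'E_P[fun w => x i w * (y w - inner beta x w)].

End defs.

(* Main.v *)
Require Import Defs.
From HB Require Import structures.
From mathcomp Require Import all_boot all_order all_algebra.
From mathcomp Require Import all_classical all_reals all_analysis.
From mathcomp Require Import ring lra.
Import Order.TTheory GRing.Theory Num.Theory.
Local Open Scope classical_set_scope.
Local Open Scope ring_scope.
Lemma real_part (R : realType) n (S Sst : {set 'I_n}) (Z Zt eps : 'I_n -> R) (mu : R)
  (hmu0 : 0 <= mu) (hmu1 : mu < 1)
  (hZS : forall i, i \in S -> Z i = 0)
  (heps : forall i, i \notin S -> 0 < eps i)
  (ihat : 'I_n) (hihat : ihat \notin S)
  (ha : forall i, i \notin S -> `|Zt i| + eps i <= `|Zt ihat| + eps ihat)
  (hb : forall i, i \notin S -> `|Zt i - Z i| <= eps i)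
  (hc : `|Zt ihat| > (1 + mu) / (1 - mu) * eps ihat) :
  `|Z ihat| > mu * \big[Num.max/0]_(i in Sst) `|Z i|.
Proof.
set M := `|Zt ihat| + eps ihat.
have hM0 : 0 <= M by rewrite addr_ge0 // ltW // heps.
have hmax : \big[Num.max/0]_(i in Sst) `|Z i| <= M.
  apply: (big_ind (fun v => v <= M)) => //.
    by move=> a b ha' hb'; rewrite ge_max ha' hb'.
  move=> i _; case: (boolP (i \in S)) => iS.
    by rewrite hZS // normr0.
  apply: le_trans (ha _ iS).
  have := hb _ iS => h.
  have e : Z i = Zt i - (Zt i - Z i) by rewrite opprB addrC subrK.
  have := ler_normB (Zt i) (Zt i - Z i); rewrite -e. lra.
have hZl : `|Zt ihat| - eps ihat <= `|Z ihat|.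
  have := hb _ hihat => h.
  have e : Zt ihat = Z ihat + (Zt ihat - Z ihat) by rewrite addrC subrK.
  have := ler_normD (Z ihat) (Zt ihat - Z ihat); rewrite -e. lra.
have hc' : `|Zt ihat| * (1 - mu) > (1 + mu) * eps ihat.
  have h1m : 0 < 1 - mu by rewrite subr_gt0.
  have e : (1+mu)/(1-mu)*eps ihat*(1-mu) = (1+mu)*eps ihat.
    by field; rewrite gt_eqF.
  by rewrite -e ltr_pM2r.
have : mu * \big[Num.max/0]_(i in Sst) `|Z i| <= mu * M by rewrite ler_wpM2l.
rewrite /M. nra.
Qed.
Lemma quad_zero (R : realType) (EB EC : R) (hC : 0 <= EC)
  (h : forall t, 2 * t * EB <= t ^+ 2 * EC) : EB = 0.
Proof.
set s := (EC + 1)^-1.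
have hu : 0 < EC + 1 by lra.
have hs : 0 < s by rewrite invr_gt0.
have hsE : s * EC <= 1.
  have : s * (EC + 1) = 1 by rewrite mulrC divff // gt_eqF.
  lra.
have := h (EB * s).
have -> : 2 * (EB * s) * EB = s * (2 * EB ^+ 2) by ring.
have -> : (EB * s) ^+ 2 * EC = s * ((s * EC) * EB ^+ 2) by ring.
rewrite ler_pM2l // => h2.
have h3 : (s * EC) * EB ^+ 2 <= EB ^+ 2.
  by rewrite ler_piMl // sqr_ge0.
have h4 : EB ^+ 2 <= 0 by lra.
have : EB ^+ 2 = 0 by apply/le_anti; rewrite h4 sqr_ge0.
by move/eqP; rewrite sqrf_eq0 => /eqP.
Qed.

Lemma Zres_S (dT : measure_display) (T : measurableType dT) (R : realType)
  (P : probability T R) (n : nat)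
  (x : 'I_n -> T -> R) (y : T -> R)
  (hx2 : forall i, x i \in Lfun P 2%:E) (hy2 : y \in Lfun P 2%:E)
  (S : {set 'I_n}) (betaS : 'I_n -> R) (hbetaS : is_betaS P x y S betaS)
  (i : 'I_n) (iS : i \in S) : Zres P x y betaS i = 0.
Proof.
set r := fun w => y w - inner betaS x w.
have hr : r \in Lfun P 2%:E.
  have -> : r = y - \sum_(j < n) betaS j *: x j.
    apply/funext => w; rewrite /r /inner /= fct_sumE.
    congr (_ - _); apply: eq_bigr => j _; by rewrite scalrfctE.
  have h12 : (1 <= 2 :> \bar R)%E by rewrite lee_fin ler1n.
  apply: rpredB => //.
  apply: rpred_sum => j _; apply: rpredZ; exact: hx2.
set A := r \* r. set B := x i \* r. set C := x i \* x i.
have hA : A \in Lfun P 1 by exact: Lfun2_mul_Lfun1.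
have hB : B \in Lfun P 1 by exact: Lfun2_mul_Lfun1.
have hC : C \in Lfun P 1 by exact: Lfun2_mul_Lfun1.
have fA := expectation_fin_num hA.
have fB := expectation_fin_num hB.
have fC := expectation_fin_num hC.
suff ZE : fine 'E_P[B] = 0.
  by rewrite /Zres -ZE; congr fine; rewrite unlock.
have Cge0 : 0 <= fine 'E_P[C].
  by rewrite fine_ge0 // expectation_ge0 // => w; rewrite /C /= -expr2 sqr_ge0.
apply: (@quad_zero R (fine 'E_P[B]) (fine 'E_P[C]) Cge0) => t.
set b := fun j => betaS j + (if j == i then t else 0).
have hb : supp b \subset S.
  apply/fintype.subsetP => j; rewrite inE /b /=; case: ifP => [/eqP -> //|_].
  rewrite addr0 => hj; move: hbetaS => [/fintype.subsetP hs _]; apply: hs.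
  by rewrite inE.
have := hbetaS.2 b hb.
have e1 : risk P x y betaS = ('E_P[A])%E.
  rewrite /risk; congr (expectation P _); apply/funext => w; by rewrite /A /= expr2.
have e2 : risk P x y b = ('E_P[(A \+ ((- (2 * t)) \o* B \+ (t ^+ 2) \o* C))%R])%E.
  rewrite /risk; congr (expectation P _); apply/funext => w.
  have -> : inner b x w = inner betaS x w + t * x i w.
    rewrite /inner /b; under eq_bigr do rewrite mulrDl.
    rewrite big_split /=; congr (_ + _).
    rewrite (bigD1 i) //= eqxx big1 ?addr0 // => j /negbTE ->; by rewrite mul0r.
  rewrite /A /B /C /r /=. ring.
rewrite e1 e2 expectationD //; last first.
  apply: rpredD; apply: Lfun_scale => //.
rewrite expectationD //; try (apply: Lfun_scale => //).
rewrite !expectationZl //.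
rewrite -(fineK fA) -(fineK fB) -(fineK fC) -!EFinM -!EFinD lee_fin.
lra.
Qed.

Theorem mainTheorem5 (dT : measure_display) (T : measurableType dT) (R : realType)
  (P : probability T R) (n : nat)
  (x : 'I_n -> T -> R) (y : T -> R) (betastar : 'I_n -> R)
  (* square-integrability of (x, y) *)
  (hx2 : forall i, x i \in Lfun P 2%:E) (hy2 : y \in Lfun P 2%:E)
  (* linear-model assumption *)
  (hEx : forall i, ('E_P[x i] = 0)%E)
  (hcond : cond_exp_zero P (fun w => y w - inner betastar x w) x)
  (* irrepresentable condition *)
  (hirr : irrepresentable P x #|supp betastar|)
  (S : {set 'I_n}) (hS : S \subset supp betastar)
  (betaS : 'I_n -> R) (hbetaS : is_betaS P x y S betaS)
  (Zt eps : 'I_n -> R) (heps : forall i, i \notin S -> 0 < eps i)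
  (ihat : 'I_n) (hihat : ihat \notin S)
  (ha : forall i, i \notin S -> `|Zt i| + eps i <= `|Zt ihat| + eps ihat)
  (hb : forall i, i \notin S -> `|Zt i - Zres P x y betaS i| <= eps i)
  (hc : `|Zt ihat| >
        (1 + muF P x (supp betastar)) / (1 - muF P x (supp betastar)) * eps ihat) :
  `|Zres P x y betaS ihat| >
    muF P x (supp betastar) *
      \big[Num.max/0]_(i in supp betastar) `|Zres P x y betaS i|.
Proof.
have [_ [hmu0 hmu1]] := hirr (supp betastar) erefl.
apply: (@real_part R n S (supp betastar) (Zres P x y betaS) Zt eps _ hmu0 hmu1 _ heps ihat hihat ha hb hc).
move=> j jS; exact: (@Zres_S _ _ _ P n x y hx2 hy2 S betaS hbetaS j jS).
Qed.
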